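(* For sequences $(r_n)_{n\in\mathbb Z},(r'_n)_{n\in\mathbb Z}$ with $0<r_n,r'_n<1$ and $(\theta_n)_{n\in\mathbb Z},(\theta'_n)_{n\in\mathbb Z}$ with $\theta_n,\theta'_n\in[0,2\pi)$ and $\theta_0=\theta_1=\theta'_0=\theta'_1=0$, define \[ U_{r,\theta}=\sum_{n\in\mathbb Z}|e_1^{n-1}\rangle\langle r_ne_1^n+e^{i\theta_n}s_ne_2^n|+|e_2^{n+1}\rangle\langle -e^{-i\theta_n}s_ne_1^n+r_ne_2^n|,\quad s_n=\sqrt{1-r_n^2}, \] and $U_{r',\theta'}$ analogously. Then $U_{r,\theta}$ and $U_{r',\theta'}$ are unitary equivalent if and only if $r=r'$ and $\theta=\theta'$.
   Context: Let $\mathcal H_n=\mathbb C^2$ for $n\in\mathbb Z$, $\mathcal H=\bigoplus_{n\in\mathbb Z}\mathcal H_n$, and $\{e_1^n,e_2^n\}$ the standard basis of $\mathcal H_n$. Dirac notation: $|x\rangle\langle y|$ is the operator $z\mapsto\langle y,z\rangle x$ (inner product conjugate-linear in the first argument). Since a unitary $U$ and $e^{i\lambda}U$ are identified, two unitaries $U_1,U_2$ on $\mathcal H$ are called unitary equivalent if there exist $\lambda\in\mathbb R$ and a unitary $W=\bigoplus_{n\in\mathbb Z}W_n$ (each $W_n$ a unitary on $\mathcal H_n$) with $e^{i\lambda}WU_1W^*=U_2$. *)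

(* Defs.v *)
From mathcomp Require Import all_boot all_order all_algebra.
From mathcomp Require Import reals trigo.
From mathcomp.real_closed Require Import complex.
Import GRing.Theory Num.Theory.
Local Open Scope ring_scope.
Local Open Scope complex_scope.

(* Conventions: the Hilbert space H = (+)_{n in Z} C^2 is not built as an
   l^2 space; a (bounded) operator T on H is represented by its block matrix
   T m n : 'M_2, with (T m n) i j = < e_i^m , T e_j^n >  (i,j in {1,2}
   encoded as 0,1). *)

Section Defs.
Variable R : realType.

Definition expi (t : R) : R[i] := (cos t +i* sin t).

Definition adjmx {m n : nat} (A : 'M[R[i]]_(m, n)) : 'M[R[i]]_(n, m) :=
  (map_mx (@conjc R) A)^T.

Definition unitary2 (W : 'M[R[i]]_2) : Prop :=
  W *m adjmx W = 1%:M /\ adjmx W *m W = 1%:M.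

Definition cvec (a b : R[i]) : 'cV[R[i]]_2 :=
  \col_(i < 2) (if i == ord0 then a else b).
Definition e1 : 'cV[R[i]]_2 := cvec 1 0.
Definition e2 : 'cV[R[i]]_2 := cvec 0 1.

(* block (m,n) of the operator |x><y| where x in H_a, y in H_b;
   <y, z> is conjugate-linear in y, so the block is x y^*. *)
Definition ketbra (a b : int) (x y : 'cV[R[i]]_2) (m n : int) : 'M[R[i]]_2 :=
  if (m == a) && (n == b) then x *m adjmx y else 0.

Definition sn (r : int -> R) (n : int) : R := Num.sqrt (1 - r n ^+ 2).

(* The k-th summand of U_{r,theta} is
     |e_1^{k-1}><r_k e_1^k + e^{i th_k} s_k e_2^k|
   + |e_2^{k+1}><-e^{-i th_k} s_k e_1^k + r_k e_2^k| ;
   its blocks vanish outside column k, so block (m,n) of the (strongly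
   convergent) sum is the block (m,n) of the n-th summand. *)
Definition Uop (r th : int -> R) (m n : int) : 'M[R[i]]_2 :=
  ketbra (n - 1) n e1 (cvec (r n)%:C (expi (th n) * (sn r n)%:C)) m n
  + ketbra (n + 1) n e2 (cvec (- (expi (- th n) * (sn r n)%:C)) (r n)%:C) m n.

(* U1, U2 unitarily equivalent: exists lam and W = (+)_n W_n (W_n unitary)
   with e^{i lam} W U1 W^* = U2; block (m,n) of W U1 W^* is W_m U1_{mn} W_n^*. *)
Definition unit_equiv (U1 U2 : int -> int -> 'M[R[i]]_2) : Prop :=
  exists (lam : R) (W : int -> 'M[R[i]]_2),
    (forall n, unitary2 (W n)) /\
    forall m n : int, expi lam *: (W m *m U1 m n *m adjmx (W n)) = U2 m n.

End Defs.
Arguments Uop {R} r th m n.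
Arguments unit_equiv {R} U1 U2.

(* Main.v *)
Require Import Defs.
From mathcomp Require Import all_boot all_order all_algebra.
From mathcomp Require Import reals trigo.
From mathcomp.real_closed Require Import complex.
From mathcomp Require Import zify ring lra.
Import Order.TTheory GRing.Theory Num.Theory.
Local Open Scope ring_scope.
Local Open Scope complex_scope.

Local Notation "x ^c" := (@conjc _ x) (at level 1, format "x ^c").

Section H.
Context {R : realType}.
Local Notation C := (R[i]).
Local Notation i0 := (@Ordinal 2 0 isT).
Local Notation i1 := (@Ordinal 2 1 isT).

Lemma cj_eq0 (x : C) : (x^c == 0) = (x == 0).
Proof. by case: x => a b; rewrite /conjc !eq_complex /= oppr_eq0. Qed.
Lemma cj0 : (0 : C)^c = 0.
Proof. by rewrite /conjc /= oppr0. Qed.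
Lemma cjK (x : C) : x^c^c = x.
Proof. by case: x => a b; rewrite /conjc opprK. Qed.
Lemma cjM (x y : C) : (x * y)^c = x^c * y^c.
Proof. by case: x => a b; case: y => c d; rewrite /conjc /=; congr Complex; ring. Qed.
Lemma cjN (x : C) : (- x)^c = - x^c.
Proof. by case: x => a b; rewrite /conjc /=. Qed.

Lemma sum2 (F : 'I_2 -> C) : \sum_(i < 2) F i = F i0 + F i1.
Proof. rewrite !big_ord_recl big_ord0 addr0 /=. congr (F _ + F _); exact: val_inj. Qed.

Lemma mul2E (A B : 'M[C]_2) i j : (A *m B) i j = A i i0 * B i0 j + A i i1 * B i1 j.
Proof. by rewrite mxE sum2. Qed.

Lemma kbE (x y : 'cV[C]_2) i j : (x *m adjmx R y) i j = x i ord0 * (y j ord0)^c.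
Proof. rewrite mxE big_ord1 /adjmx !mxE. congr (x i _ * (y _ _)^c); exact: val_inj. Qed.

Lemma cvecE a b (i : 'I_2) : cvec R a b i ord0 = if val i == 0%N then a else b.
Proof. by rewrite mxE. Qed.

Lemma cvec_0 a b : cvec R a b i0 ord0 = a. Proof. by rewrite mxE. Qed.
Lemma cvec_1 a b : cvec R a b i1 ord0 = b. Proof. by rewrite mxE. Qed.
Lemma e1_0 : e1 R i0 ord0 = 1. Proof. by rewrite mxE. Qed.
Lemma e1_1 : e1 R i1 ord0 = 0. Proof. by rewrite mxE. Qed.
Lemma e2_0 : e2 R i0 ord0 = 0. Proof. by rewrite mxE. Qed.
Lemma e2_1 : e2 R i1 ord0 = 1. Proof. by rewrite mxE. Qed.

Lemma UopA (r th : int -> R) m :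
  Uop r th m (m+1) = e1 R *m adjmx R (cvec R (r (m+1))%:C (expi R (th (m+1)) * (sn R r (m+1))%:C)).
Proof.
rewrite /Uop /ketbra addrK !eqxx /=.
have -> : (m == m + 1 + 1) = false.
  by apply/eqP; lia.
by rewrite addr0.
Qed.

Lemma UopB (r th : int -> R) m :
  Uop r th (m+1) m = e2 R *m adjmx R (cvec R (- (expi R (- th m) * (sn R r m)%:C)) (r m)%:C).
Proof.
rewrite /Uop /ketbra !eqxx /= andbT.
have -> : (m + 1 == m - 1) = false.
  by apply/eqP; lia.
by rewrite add0r.
Qed.


Lemma adjE m n (A : 'M[C]_(m,n)) i j : adjmx R A i j = (A j i)^c.
Proof. by rewrite !mxE. Qed.

Lemma I2 (i : 'I_2) : i = i0 \/ i = i1.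
Proof. by case: i => [[|[|//]] ?]; [left|right]; apply: val_inj. Qed.

Lemma diagE (P M Q : 'M[C]_2) i j : P i0 i1 = 0 -> P i1 i0 = 0 -> Q i0 i1 = 0 -> Q i1 i0 = 0 ->
  (P *m M *m adjmx R Q) i j = P i i * M i j * (Q j j)^c.
Proof.
move=> P01 P10 Q01 Q10; rewrite !mul2E !adjE.
by case: (I2 i) => ->; case: (I2 j) => ->;
  rewrite ?P01 ?P10 ?Q01 ?Q10 ?cj0 ?mulr0 ?mul0r ?add0r ?addr0.
Qed.

Lemma step1 (W : int -> 'M[C]_2) c (U U' : int -> int -> 'M[C]_2) :
  (forall n, unitary2 R (W n)) ->
  (forall m n, c *: (W m *m U m n *m adjmx R (W n)) = U' m n) ->
  forall m n, c *: (W m *m U m n) = U' m n *m W n.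
Proof.
move=> HW H m n; rewrite -H -scalemxAl -!mulmxA (proj2 (HW n)) mulmx1 //.
Qed.

Lemma unit_diag (W : 'M[C]_2) : unitary2 R W -> W i0 i1 = 0 -> W i1 i0 = 0 ->
  W i0 i0 * (W i0 i0)^c = 1 /\ W i1 i1 * (W i1 i1)^c = 1.
Proof.
move=> [H _] W01 W10; split.
  by move: (congr1 (fun M : 'M[C]_2 => M i0 i0) H) => /=; rewrite mul2E !adjE W01 cj0 mulr0 addr0 mxE.
by move: (congr1 (fun M : 'M[C]_2 => M i1 i1) H) => /=; rewrite mul2E !adjE W10 cj0 mulr0 add0r mxE.
Qed.


Lemma expi0 : expi R 0 = 1.
Proof. by rewrite /expi cos0 sin0. Qed.

Lemma expiJ t : (expi R t)^c = expi R (- t).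
Proof. by rewrite /expi cosN sinN. Qed.

Lemma expiJK t : expi R t * (expi R t)^c = 1.
Proof.
rewrite /expi /= /conjc; apply/eqP; rewrite eq_complex /=; apply/andP; split; apply/eqP.
  by rewrite mulrN opprK -!expr2 cos2Dsin2.
by rewrite mulrN mulrC addNr.
Qed.

Lemma sin_eq0_pi h : - pi < h < pi -> sin h = 0 -> h = 0 :> R.
Proof.
move=> /andP[h1 h2] s0; case: (ltrgtP h 0) => // hh.
  have : 0 < sin (- h) by apply: sin_gt0_pi; rewrite oppr_gt0 hh ltrNl.
  by rewrite sinN s0 oppr0 ltxx.
have : 0 < sin h by apply: sin_gt0_pi; rewrite hh.
by rewrite s0 ltxx.
Qed.

Lemma expi_inj t t' : 0 <= t < 2 * pi -> 0 <= t' < 2 * pi -> expi R t = expi R t' -> t = t'.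
Proof.
move=> /andP[t1 t2] /andP[t'1 t'2] [ec es].
have cd : cos (t - t') = 1 by rewrite cosB ec es -!expr2 cos2Dsin2.
set h := (t - t') / 2.
have hd : t - t' = h *+ 2 by rewrite /h -mulr_natr mulfVK // pnatr_eq0.
have ch : cos h ^+ 2 = 1.
  move: cd; rewrite hd cos_mulr2n => /eqP; rewrite subr_eq -mulr_natr => /eqP H.
  by apply: (mulIf (x := 2%:R)); rewrite ?pnatr_eq0 // H mul1r.
have sh : sin h = 0.
  by apply/eqP; rewrite -sqrf_eq0 sin2cos2 ch subrr.
have pi0 : 0 < pi :> R by exact: pi_gt0.
have : h = 0.
  apply: sin_eq0_pi => //; rewrite /h; apply/andP; split.
    by rewrite ltr_pdivlMr // mulNr; lra.
  by rewrite ltr_pdivrMr //; lra.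
by move=> h0; apply/eqP; rewrite -subr_eq0 hd h0 mul0rn.
Qed.


Lemma conjR (x : R) : (x%:C)^c = x%:C :> C.
Proof. by rewrite /conjc /= oppr0. Qed.

Lemma entryE (P Q M M' : 'M[C]_2) c i j : P i0 i1 = 0 -> P i1 i0 = 0 -> Q i0 i1 = 0 -> Q i1 i0 = 0 ->
  c *: (P *m M *m adjmx R Q) = M' -> c * (P i i * M i j * (Q j j)^c) = M' i j.
Proof.
move=> *; subst M'; by rewrite mxE diagE.
Qed.

Lemma int_const (f : int -> C) : (forall m, f (m + 1) = f m) -> forall m, f m = f 0.
Proof.
move=> Hf.
have P : forall n : nat, f n%:Z = f 0.
  by elim=> // n IH; rewrite -IH -addn1 PoszD Hf.
have N : forall n : nat, f (- n%:Z) = f 0.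
  elim=> [|n IH]; first by rewrite oppr0.
  rewrite -IH -(Hf (- n.+1%:Z)); congr f; rewrite -addn1 PoszD opprD addrNK //.
by case=> n; [exact: P | rewrite NegzE; exact: N].
Qed.

End H.

Theorem theorem2p5 (R : realType) (r r' th th' : int -> R) :
  (forall n, 0 < r n < 1) -> (forall n, 0 < r' n < 1) ->
  (forall n, 0 <= th n < 2 * pi) -> (forall n, 0 <= th' n < 2 * pi) ->
  th 0 = 0 -> th 1 = 0 -> th' 0 = 0 -> th' 1 = 0 ->
  (unit_equiv (Uop r th) (Uop r' th') <-> (r = r' /\ th = th')).
Proof.
move=> Hr Hr' Ht Ht' t0 t1 t'0 t'1; split; last first.
  move=> [<- <-]; exists 0, (fun _ => 1%:M); split.
    move=> n; rewrite /unitary2 /adjmx map_scalar_mx tr_scalar_mx.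
    by rewrite rmorph1 mulmx1.
  by move=> m n; rewrite expi0 scale1r mul1mx /adjmx map_scalar_mx tr_scalar_mx rmorph1 mulmx1.
case=> lam [W [HW H]].
set c := expi R lam.
have cc : c * c^c = 1 by exact: expiJK.
have c0 : c != 0 by apply/eqP => c0; move: cc; rewrite c0 mul0r => /eqP; rewrite eq_sym oner_eq0.
have H1 := step1 _ _ _ _ HW H.
have rC0 : forall n, (r n)%:C != 0.
  by move=> n; rewrite eq_complex /= eqxx andbT; case/andP: (Hr n) => /gt_eqF ->.
have W10 : forall m, W m (@Ordinal 2 1 isT) (@Ordinal 2 0 isT) = 0.
  move=> m; have := congr1 (fun M : 'M[R[i]]_2 => M (@Ordinal 2 1 isT) (@Ordinal 2 0 isT)) (H1 m (m+1)).
  rewrite /= !UopA mxE !mul2E !kbE ?e1_0 ?e1_1 ?e2_0 ?e2_1 ?cvec_0 ?cvec_1 ?cj0 ?mul0r ?mulr0 ?mul1r ?mulr1 ?addr0 ?add0r.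
  by rewrite conjR => /eqP; rewrite !mulf_eq0 (negbTE c0) (negbTE (rC0 _)) orbF /= => /eqP.
have W01 : forall m, W m (@Ordinal 2 0 isT) (@Ordinal 2 1 isT) = 0.
  move=> m; rewrite -(subrK 1 m); set k := m - 1.
  have := congr1 (fun M : 'M[R[i]]_2 => M (@Ordinal 2 0 isT) (@Ordinal 2 1 isT)) (H1 (k+1) k).
  rewrite /= !UopB mxE !mul2E !kbE ?e1_0 ?e1_1 ?e2_0 ?e2_1 ?cvec_0 ?cvec_1 ?cj0 ?mul0r ?mulr0 ?mul1r ?mulr1 ?addr0 ?add0r.
  by rewrite conjR => /eqP; rewrite !mulf_eq0 (negbTE c0) (negbTE (rC0 _)) orbF /= => /eqP.
set a := fun m => W m (@Ordinal 2 0 isT) (@Ordinal 2 0 isT).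
set b := fun m => W m (@Ordinal 2 1 isT) (@Ordinal 2 1 isT).
have Hu : forall m, a m * (a m)^c = 1 /\ b m * (b m)^c = 1.
  by move=> m; apply: unit_diag; [exact: HW | exact: W01 | exact: W10].
have Ent : forall m n i j, c * (W m i i * Uop r th m n i j * ((W n j j)^c)%C) = Uop r' th' m n i j.
  by move=> m n i j; apply: entryE; [exact: W01 | exact: W10 | exact: W01 | exact: W10 | exact: H].
have E1 : forall m, c * (a m * (r (m+1))%:C * ((a (m+1))^c)%C) = (r' (m+1))%:C.
  move=> m; have := Ent m (m+1) (@Ordinal 2 0 isT) (@Ordinal 2 0 isT).
  by rewrite !UopA !kbE ?e1_0 ?e1_1 ?cvec_0 ?cvec_1 (conjR (r (m+1))) (conjR (r' (m+1))) !mul1r.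
have E4 : forall m, c * (b (m+1) * (r m)%:C * ((b m)^c)%C) = (r' m)%:C.
  move=> m; have := Ent (m+1) m (@Ordinal 2 1 isT) (@Ordinal 2 1 isT).
  by rewrite !UopB !kbE ?e2_0 ?e2_1 ?cvec_0 ?cvec_1 (conjR (r m)) (conjR (r' m)) !mul1r.
have E3 : forall m, c * (b (m+1) * (- (expi R (- th m) * (sn R r m)%:C))^c * ((a m)^c)%C)
     = (- (expi R (- th' m) * (sn R r' m)%:C))^c.
  move=> m; have := Ent (m+1) m (@Ordinal 2 1 isT) (@Ordinal 2 0 isT).
  by rewrite !UopB !kbE ?e2_0 ?e2_1 ?cvec_0 ?cvec_1 !mul1r.
clear Ent H H1.
have Er : forall n, r n = r' n.
  move=> n; rewrite -(subrK 1 n); set m := n - 1.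
  have e := E1 m.
  have e' := congr1 (@conjc _) e; rewrite !cjM cjK (conjR (r (m+1))) (conjR (r' (m+1))) in e'.
  have h : (c * (a m * (r (m+1))%:C * (a (m+1))^c)) * (c^c * ((a m)^c * (r (m+1))%:C * a (m+1)))
     = (r' (m+1))%:C * (r' (m+1))%:C by rewrite e e'.
  have h2 : (r (m+1))%:C * (r (m+1))%:C = (r' (m+1))%:C * (r' (m+1))%:C.
    rewrite -h; transitivity ((c * c^c) * (a m * (a m)^c) * (a (m+1) * (a (m+1))^c) * ((r (m+1))%:C * (r (m+1))%:C)).
      by rewrite cc (proj1 (Hu m)) (proj1 (Hu (m+1))) !mul1r.
    ring.
  move: h2 => /(congr1 (fun z : R[i] => complex.Re z)) /= h2.
  have := Hr (m+1); have := Hr' (m+1); nra.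
have Err : r' = r by apply: boolp.funext => n; rewrite Er.
subst r'.
have S0 : forall m, (sn R r m)%:C != 0.
  move=> m; rewrite eq_complex /= eqxx andbT; apply: lt0r_neq0.
  rewrite /sn sqrtr_gt0; have := Hr m; nra.
have Ha : forall m, a (m+1) = c * a m.
  move=> m.
  have h : c * a m * (a (m+1))^c = 1.
    apply: (mulIf (rC0 (m+1))); rewrite mul1r -{2}(E1 m); ring.
  have hu := proj1 (Hu (m+1)).
  rewrite -[LHS]mul1r -h -[RHS]mulr1 -hu; ring.
have Hb : forall m, b m = c * b (m+1).
  move=> m.
  have h : c * b (m+1) * (b m)^c = 1.
    apply: (mulIf (rC0 m)); rewrite mul1r -{2}(E4 m); ring.
  have hu := proj2 (Hu m).
  rewrite -[LHS]mul1r -h -[RHS]mulr1 -hu; ring.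
set d := fun m => b m * (a m)^c.
have Hd : forall m, d m * expi R (th m) = expi R (th' m).
  move=> m; have := E3 m.
  rewrite !cjN !cjM !expiJ !opprK (conjR (sn R r m)) => e3.
  apply: (mulIf (S0 m)); rewrite /d (Hb m) -[RHS]opprK -e3; ring.
have d0 : d 0 = 1 by have := Hd 0; rewrite t0 t'0 expi0 mulr1.
have d1 : d 1 = 1 by have := Hd 1; rewrite t1 t'1 expi0 mulr1.
have Hd1 : forall m, d (m+1) = c^c * c^c * d m.
  move=> m; rewrite /d (Ha m) cjM.
  have -> : b (m+1) = c^c * b m by rewrite (Hb m) mulrA (mulrC c^c) cc mul1r.
  ring.
have cc2 : c^c * c^c = 1 by have := Hd1 0; rewrite add0r d1 d0 mulr1.
have Dc : forall m, d m = d 0 by apply: int_const => m; rewrite Hd1 cc2 mul1r.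
split => //; apply: boolp.funext => m; apply: expi_inj; [exact: Ht | exact: Ht' |].
by rewrite -Hd Dc d0 mul1r.
Qed.
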